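(* Assume the standing assumptions (P1)–(P6) described in the context. Let $(f_0,t_0)\in\mathrm{Dom}\,\mathcal P$ and suppose the Volterra problem VP$(f_0,t_0)$ has two solutions $\varphi\in C([t_0,T),F)$ and $\varphi'\in C([t_0,T'),F)$. Then $\varphi(t)=\varphi'(t)$ for all $t\in[t_0,\min(T,T'))$.
   Context: All Banach spaces are over a common field ($\mathbb R$ or $\mathbb C$). For Banach spaces $X,Y$, $X\hookrightarrow Y$ means that $X$ is a dense linear subspace of $Y$ and the inclusion is continuous. Standing assumptions: (P1) $F_+,F,F_-$ are Banach spaces with norms $\|\cdot\|_+,\|\cdot\|,\|\cdot\|_-$ and $F_+\hookrightarrow F\hookrightarrow F_-$; $B(f_0,r):=\{f\in F:\|f-f_0\|<r\}$. (P2) $\mathcal A:F_+\to F_-$ is linear and on $F_+$ the norm $\|\cdot\|_+$ is equivalent to $f\mapsto\|f\|_-+\|\mathcal Af\|_-$. (P3) $\mathcal A$, viewed as a densely defined operator in $F_-$ with domain $F_+$, generates a strongly continuous semigroup $(e^{t\mathcal A})_{t\ge0}$ on $F_-$. (P4) $e^{t\mathcal A}(F)\subset F$ for $t\ge0$, $(f,t)\mapsto e^{t\mathcal A}f$ is continuous from $F\times[0,\infty)$ to $F$, and $u\in C([0,\infty),(0,\infty))$ satisfies $\|e^{t\mathcal A}f\|\le u(t)\|f\|$. (P5) $e^{t\mathcal A}(F_-)\subset F$ for $t>0$, $(f,t)\mapsto e^{t\mathcal A}f$ is continuous from $F_-\times(0,\infty)$ to $F$, and $u_-\in C((0,\infty),(0,\infty))$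 satisfies $\|e^{t\mathcal A}f\|\le u_-(t)\|f\|_-$ for $t>0$, $f\in F_-$, with $u_-(t)=O(t^{-(1-\sigma)})$ as $t\to0^+$ for some $\sigma\in(0,1]$. (P6) $\mathcal P:\mathrm{Dom}\,\mathcal P\subset F\times\mathbb R\to F_-$; the domain is semi-open (for each $(f_0,t_0)\in\mathrm{Dom}\,\mathcal P$ there are $\delta,r\in(0,+\infty]$ with $B(f_0,r)\times[t_0,t_0+\delta)\subset\mathrm{Dom}\,\mathcal P$), and for every closed bounded $\mathcal C\subset F\times\mathbb R$ with $\mathcal C\subset\mathrm{Dom}\,\mathcal P$ there are $L,M\ge0$ with $\|\mathcal P(f,t)-\mathcal P(f',t')\|_-\le L\|f-f'\|+M|t-t'|$ on $\mathcal C$. A solution of the Volterra problem VP$(f_0,t_0)$ on $[t_0,T)$ ($T\in(t_0,+\infty]$) is a $\varphi\in C([t_0,T),F)$ whose graph $\{(\varphi(t),t)\}$ lies in $\mathrm{Dom}\,\mathcal P$ and with $\varphi(t)=e^{(t-t_0)\mathcal A}f_0+\int_{t_0}^te^{(t-s)\mathcal A}\mathcal P(\varphi(s),s)\,ds$ for all $t\in[t_0,T)$. *)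

(* Defs.v *)
(* Banach spaces = CompleteNormedModule R_AbsRing. *)
From Stdlib Require Import Reals.
From Coquelicot Require Export Coquelicot.
Open Scope R_scope.

Section Defs.
Context {K : AbsRing}.

Definition dense_cont_embedding {X Y : NormedModule K} (i : X -> Y) : Prop :=
  is_linear i /\ (forall x y, i x = i y -> x = y) /\
  (forall (y : Y) (eps : R), 0 < eps -> exists x : X, norm (minus (i x) y) < eps).
End Defs.

(* linear (not necessarily bounded) map *)
Definition lin_map {X Y : NormedModule R_AbsRing} (A : X -> Y) : Prop :=
  (forall x y, A (plus x y) = plus (A x) (A y)) /\
  (forall (k : R) x, A (scal k x) = scal k (A x)).

Definition C0_semigroup {X : NormedModule R_AbsRing} (S : R -> X -> X) : Prop :=
  (forall t, 0 <= t -> is_linear (S t)) /\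
  (forall x, S 0 x = x) /\
  (forall s t x, 0 <= s -> 0 <= t -> S (s + t) x = S s (S t x)) /\
  (forall x t, 0 <= t ->
     filterlim (fun s => S s x) (within (fun s => 0 <= s) (locally t)) (locally (S t x))).

(* the generator of S is the operator A with domain j(D), j : D -> X *)
Definition generates {D X : NormedModule R_AbsRing} (j : D -> X) (A : D -> X)
  (S : R -> X -> X) : Prop :=
  (forall y : X, (exists z : X,
       filterlim (fun h => scal (/ h) (minus (S h y) y)) (at_right 0) (locally z))
     <-> exists x : D, y = j x) /\
  (forall x : D,
     filterlim (fun h => scal (/ h) (minus (S h (j x)) (j x))) (at_right 0) (locally (A x))).

(* standing assumptions (P1)-(P6); i1 : F+ ↪ F, i2 : F ↪ F-,
   S t = e^{tA} on F-, SF t = e^{tA} restricted to F (t >= 0),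
   SFm t = e^{tA} : F- -> F (t > 0) *)
Definition standing_assumptions
  {Fp F Fm : CompleteNormedModule R_AbsRing}
  (i1 : Fp -> F) (i2 : F -> Fm) (A : Fp -> Fm) (S : R -> Fm -> Fm)
  (SF : R -> F -> F) (u : R -> R) (SFm : R -> Fm -> F) (um : R -> R) (sigma : R)
  (DomP : F -> R -> Prop) (P : F -> R -> Fm) : Prop :=
  dense_cont_embedding i1 /\ dense_cont_embedding i2 /\
  lin_map A /\
  (exists c C : R, 0 < c /\ 0 < C /\ forall f : Fp,
     c * norm f <= norm (i2 (i1 f)) + norm (A f) /\
     norm (i2 (i1 f)) + norm (A f) <= C * norm f) /\
  C0_semigroup S /\ generates (fun f => i2 (i1 f)) A S /\
  (forall t (f : F), 0 <= t -> i2 (SF t f) = S t (i2 f)) /\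
  (forall (f : F) t, 0 <= t ->
     filterlim (fun p : F * R => SF (snd p) (fst p))
       (within (fun p : F * R => 0 <= snd p) (locally (f, t))) (locally (SF t f))) /\
  (forall t, 0 <= t -> 0 < u t /\
     filterlim u (within (fun s => 0 <= s) (locally t)) (locally (u t))) /\
  (forall t (f : F), 0 <= t -> norm (SF t f) <= u t * norm f) /\
  (forall t (f : Fm), 0 < t -> i2 (SFm t f) = S t f) /\
  (forall (f : Fm) t, 0 < t ->
     filterlim (fun p : Fm * R => SFm (snd p) (fst p)) (locally (f, t)) (locally (SFm t f))) /\
  (forall t, 0 < t -> 0 < um t /\ continuous um t) /\
  (forall t (f : Fm), 0 < t -> norm (SFm t f) <= um t * norm f) /\
  0 < sigma <= 1 /\
  (exists C delta : R, 0 < delta /\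
     forall t, 0 < t < delta -> um t <= C * Rpower t (sigma - 1)) /\
  (* P6 : semi-open domain *)
  (forall f0 t0, DomP f0 t0 -> exists delta r : R, 0 < delta /\ 0 < r /\
     forall f t, norm (minus f f0) < r -> t0 <= t < t0 + delta -> DomP f t) /\
  (forall Cs : F * R -> Prop,
     closed Cs ->
     (exists B : R, forall p, Cs p -> norm (fst p) + Rabs (snd p) <= B) ->
     (forall p, Cs p -> DomP (fst p) (snd p)) ->
     exists L M : R, 0 <= L /\ 0 <= M /\ forall f t f' t', Cs (f, t) -> Cs (f', t') ->
       norm (minus (P f t) (P f' t')) <= L * norm (minus f f') + M * Rabs (t - t')).

(* phi is a solution of VP(f0,t0) on [t0,T) ; the integral is the Riemann
   integral in F- of the (F- -continuous) integrand, and F is viewed inside F- via i2 *)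
Definition VP_solution
  {F Fm : CompleteNormedModule R_AbsRing} (i2 : F -> Fm) (S : R -> Fm -> Fm)
  (DomP : F -> R -> Prop) (P : F -> R -> Fm)
  (f0 : F) (t0 : R) (T : Rbar) (phi : R -> F) : Prop :=
  Rbar_lt t0 T /\
  (forall t, t0 <= t -> Rbar_lt t T ->
     filterlim phi (within (fun s => t0 <= s /\ Rbar_lt s T) (locally t)) (locally (phi t))) /\
  (forall t, t0 <= t -> Rbar_lt t T -> DomP (phi t) t) /\
  (forall t, t0 <= t -> Rbar_lt t T ->
     exists v : Fm, is_RInt (fun s => S (t - s) (P (phi s) s)) t0 t v /\
       i2 (phi t) = plus (S (t - t0) (i2 f0)) v).

(* Main.v *)
Require Import Defs.
From Stdlib Require Import Reals Lra Classical.
From Coquelicot Require Import Coquelicot.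
Open Scope R_scope.

Lemma RS_lin {U V : NormedModule R_AbsRing} (l : U -> V) (f : R -> U) ptd :
  is_linear l -> Riemann_sum (fun x => l (f x)) ptd = l (Riemann_sum f ptd).
Proof.
  intros Hl. induction ptd using SF_cons_ind.
  - unfold Riemann_sum. simpl. symmetry. apply (linear_zero l Hl).
  - rewrite !Riemann_sum_cons, IHptd.
    rewrite (linear_plus l Hl), (linear_scal l Hl). reflexivity.
Qed.

Lemma is_RInt_lin {U V : NormedModule R_AbsRing} (l : U -> V) (f : R -> U) a b v :
  is_linear l -> is_RInt f a b v -> is_RInt (fun x => l (f x)) a b (l v).
Proof.
  intros Hl Hf. unfold is_RInt in *.
  eapply filterlim_ext.
  2: { eapply filterlim_comp. exact Hf. apply (linear_cont l v Hl). }
  intros ptd. simpl. rewrite (linear_scal l Hl), (RS_lin l f); auto.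
Qed.

Lemma linear_minus {U V : NormedModule R_AbsRing} (l : U -> V) x y :
  is_linear l -> l (minus x y) = minus (l x) (l y).
Proof. intros Hl. unfold minus. rewrite (linear_plus l Hl), (linear_opp l y Hl). auto. Qed.

Definition cl (t0 t1 x : R) := Rmin t1 (Rmax t0 x).

Lemma cl_in t0 t1 x : t0 <= t1 -> t0 <= cl t0 t1 x <= t1.
Proof. unfold cl, Rmin, Rmax. intros; repeat destruct Rle_dec; lra. Qed.
Lemma cl_id t0 t1 x : t0 <= x <= t1 -> cl t0 t1 x = x.
Proof. unfold cl, Rmin, Rmax. intros; repeat destruct Rle_dec; lra. Qed.
Lemma cl_lip t0 t1 x y : t0 <= t1 -> Rabs (cl t0 t1 x - cl t0 t1 y) <= Rabs (x - y).
Proof. unfold cl, Rmin, Rmax. intros; repeat destruct Rle_dec;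
  unfold Rabs; repeat destruct Rcase_abs; lra. Qed.

Lemma ballR x e y : ball x e y <-> Rabs (y - x) < e.
Proof. reflexivity. Qed.

Lemma clamp_cont {V : UniformSpace} (f : R -> V) t0 t1 (T : Rbar) s :
  t0 <= s <= t1 -> Rbar_lt t1 T ->
  (forall s, t0 <= s -> Rbar_lt s T ->
     filterlim f (within (fun x => t0 <= x /\ Rbar_lt x T) (locally s)) (locally (f s))) ->
  continuous (fun x => f (cl t0 t1 x)) s.
Proof.
  intros Hs HT Hc. unfold continuous. rewrite (cl_id t0 t1 s Hs).
  intros Q HQ.
  assert (Hs' : Rbar_lt s T) by (eapply Rbar_le_lt_trans; [|exact HT]; simpl; lra).
  destruct (Hc s (proj1 Hs) Hs' Q HQ) as [e He].
  exists e. intros y Hy. apply He.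
  - apply ballR. apply ballR in Hy.
    pose proof (cl_lip t0 t1 y s ltac:(lra)). rewrite (cl_id t0 t1 s Hs) in H. pose proof (proj1 (ballR s e y) Hy). lra.
  - pose proof (cl_in t0 t1 y ltac:(lra)). split. lra.
    eapply Rbar_le_lt_trans; [|exact HT]. change (cl t0 t1 y <= t1). lra.
Qed.


Lemma cont_bound (f : R -> R) a b : a <= b ->
  (forall c, a <= c <= b -> continuous f c) -> exists M, forall c, a <= c <= b -> f c <= M.
Proof.
  intros Hab Hc. destruct (continuity_ab_maj f a b Hab) as [Mx [H1 H2]].
  - intros c Hc'. apply continuity_pt_filterlim. apply Hc. auto.
  - exists (f Mx). auto.
Qed.

Lemma deriv_pw t s sig : s < t ->
  derivable_pt_lim (fun x => Rpower (t - x) sig) s (- (sig * Rpower (t - s) (sig - 1))).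
Proof.
  intros Hs.
  replace (- (sig * Rpower (t - s) (sig - 1))) with ((sig * Rpower (t - s) (sig - 1)) * (-1)) by ring.
  apply (derivable_pt_lim_comp (fun x => t - x) (fun y => Rpower y sig) s (-1)).
  - replace (-1) with (0 - 1) by ring. apply derivable_pt_lim_minus.
    apply derivable_pt_lim_const. apply derivable_pt_lim_id.
  - apply derivable_pt_lim_power. lra.
Qed.

Lemma cont_pw t s sig : s < t -> continuous (fun x => Rpower (t - x) sig) s.
Proof.
  intros Hs. apply (ex_derive_continuous (K:=R_AbsRing) (V:=R_NormedModule)). eexists. apply is_derive_Reals. apply deriv_pw. auto.
Qed.

Lemma int_pow t tau a sig c : tau <= a -> a < t -> 0 < sig ->
  is_RInt (fun s => c * Rpower (t - s) (sig - 1)) tau a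
    (c / sig * (Rpower (t - tau) sig - Rpower (t - a) sig)).
Proof.
  intros H1 H2 Hs.
  assert (Hd := is_RInt_derive (fun s => - (c / sig) * Rpower (t - s) sig)
                 (fun s => c * Rpower (t - s) (sig - 1)) tau a).
  match type of Hd with _ -> _ -> is_RInt _ _ _ ?v =>
    replace (c / sig * (Rpower (t - tau) sig - Rpower (t - a) sig)) with v end.
  - apply Hd.
    + intros x Hx. rewrite Rmin_left in Hx by lra. rewrite Rmax_right in Hx by lra.
      apply is_derive_Reals.
      replace (c * Rpower (t - x) (sig - 1)) with (- (c / sig) * (- (sig * Rpower (t - x) (sig - 1)))) by (field; lra).
      apply (derivable_pt_lim_scal (fun x => Rpower (t - x) sig)). apply deriv_pw. lra.
    + intros x Hx. rewrite Rmin_left in Hx by lra. rewrite Rmax_right in Hx by lra.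
      apply (continuous_scal_r c (fun x => Rpower (t - x) (sig - 1))).
      apply cont_pw. lra.
  - unfold minus, plus, opp. simpl. field. lra.
Qed.

Lemma minus_zero_eq {G : AbelianGroup} (x y : G) : minus x y = zero -> x = y.
Proof.
  intros H. transitivity (plus (minus x y) y).
  - unfold minus. rewrite <- plus_assoc, plus_opp_l, plus_zero_r. reflexivity.
  - rewrite H. apply plus_zero_l.
Qed.


Lemma lip_cont {V W : NormedModule R_AbsRing} (h : R -> W) (p : R -> V) (c : R -> R) s L M :
  0 <= L -> 0 <= M ->
  (forall x, norm (minus (h x) (h s)) <= L * norm (minus (p x) (p s)) + M * Rabs (c x - c s)) ->
  continuous p s -> continuous c s -> continuous h s.
Proof.
  intros HL HM Hl Hp Hc. unfold continuous.
  apply filterlim_locally_ball_norm. intros eps.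
  assert (He1 : 0 < eps / (2 * (L + 1))) by (apply Rdiv_lt_0_compat; [apply cond_pos | lra]).
  assert (He2 : 0 < eps / (2 * (M + 1))) by (apply Rdiv_lt_0_compat; [apply cond_pos | lra]).
  pose proof (proj1 (filterlim_locally_ball_norm _ _) Hp (mkposreal _ He1)) as Hp1.
  pose proof (proj1 (filterlim_locally_ball_norm _ _) Hc (mkposreal _ He2)) as Hc1.
  generalize (filter_and _ _ Hp1 Hc1). apply filter_imp. intros x [H1 H2].
  unfold ball_norm in *. simpl in H1, H2.
  assert (H2' : Rabs (c x - c s) < eps / (2 * (M + 1))) by exact H2.
  specialize (Hl x).
  assert (A1 : L * norm (minus (p x) (p s)) <= L * (eps / (2 * (L + 1)))).
  { apply Rmult_le_compat_l; lra. }
  assert (A2 : M * Rabs (c x - c s) <= M * (eps / (2 * (M + 1)))).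
  { apply Rmult_le_compat_l; lra. }
  assert (A3 : L * (eps / (2 * (L + 1))) < eps / 2).
  { replace (L * (eps / (2 * (L + 1)))) with (eps / 2 - eps / (2 * (L + 1))) by (field; lra). lra. }
  assert (A4 : M * (eps / (2 * (M + 1))) < eps / 2).
  { replace (M * (eps / (2 * (M + 1)))) with (eps / 2 - eps / (2 * (M + 1))) by (field; lra). lra. }
  lra.
Qed.

Lemma graph_closed {V : NormedModule R_AbsRing} (p q : R -> V) t0 t1 :
  (forall s, t0 <= s <= t1 -> continuous p s) ->
  (forall s, t0 <= s <= t1 -> continuous q s) ->
  closed (fun z : V * R => t0 <= snd z <= t1 /\ (fst z = p (snd z) \/ fst z = q (snd z))).
Proof.
  intros Hp Hq [f t] Hx. apply NNPP. intros Hn. apply Hx. simpl in Hn.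
  destruct (Rlt_dec t t0) as [Hlt|Hge].
  { assert (He : 0 < t0 - t) by lra. exists (mkposreal _ He).
    intros [f' t'] [_ Hb]. simpl in *. pose proof (proj1 (ballR _ _ _) Hb). intros [[Ha _] _]. apply Rabs_def2 in H. lra. }
  destruct (Rlt_dec t1 t) as [Hlt'|Hge'].
  { assert (He : 0 < t - t1) by lra. exists (mkposreal _ He).
    intros [f' t'] [_ Hb]. simpl in *. pose proof (proj1 (ballR _ _ _) Hb).
    intros [[_ Ha] _]. apply Rabs_def2 in H. lra. }
  assert (Ht : t0 <= t <= t1) by lra.
  assert (Np : f <> p t) by tauto. assert (Nq : f <> q t) by tauto.
  assert (Hnp : 0 < norm (minus (p t) f)).
  { apply norm_gt_0. intros E. apply Np. symmetry. apply minus_zero_eq. auto. }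
  assert (Hnq : 0 < norm (minus (q t) f)).
  { apply norm_gt_0. intros E. apply Nq. symmetry. apply minus_zero_eq. auto. }
  pose proof (@norm_factor_gt_0 _ V) as Hnf.
  set (e0 := Rmin (norm (minus (p t) f)) (norm (minus (q t) f)) / (2 * @norm_factor _ V)).
  assert (He0 : 0 < e0).
  { unfold e0. apply Rdiv_lt_0_compat. apply Rmin_pos; auto. lra. }
  assert (Hm : @norm_factor _ V * (e0 + e0) = Rmin (norm (minus (p t) f)) (norm (minus (q t) f))).
  { unfold e0. field. lra. }
  destruct (Hp t Ht _ (locally_ball (p t) (mkposreal _ He0))) as [dp Hdp].
  destruct (Hq t Ht _ (locally_ball (q t) (mkposreal _ He0))) as [dq Hdq].
  assert (He : 0 < Rmin e0 (Rmin dp dq)).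
  { apply Rmin_pos; auto. apply Rmin_pos; apply cond_pos. }
  exists (mkposreal _ He). intros [f' t'] [Hf Hb]. simpl in Hf, Hb.
  intros [_ [E|E]]; simpl in E; subst f'.
  - assert (B1 : ball (p t) e0 (p t')).
    { apply Hdp. eapply ball_le; [|exact Hb]. simpl.
      eapply Rle_trans; [apply Rmin_r|apply Rmin_l]. }
    assert (B2 : ball f e0 (p t')).
    { eapply ball_le; [|exact Hf]. apply Rmin_l. }
    assert (B3 : ball f (e0 + e0) (p t)) by (eapply ball_triangle; [exact B2| apply ball_sym; exact B1]).
    assert (Hpe : 0 < e0 + e0) by lra.
    pose proof (norm_compat2 f (p t) (mkposreal _ Hpe) B3) as N. simpl in N.
    rewrite Hm in N. pose proof (Rmin_l (norm (minus (p t) f)) (norm (minus (q t) f))). lra.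
  - assert (B1 : ball (q t) e0 (q t')).
    { apply Hdq. eapply ball_le; [|exact Hb]. simpl.
      eapply Rle_trans; [apply Rmin_r|apply Rmin_r]. }
    assert (B2 : ball f e0 (q t')).
    { eapply ball_le; [|exact Hf]. apply Rmin_l. }
    assert (B3 : ball f (e0 + e0) (q t)) by (eapply ball_triangle; [exact B2| apply ball_sym; exact B1]).
    assert (Hpe : 0 < e0 + e0) by lra.
    pose proof (norm_compat2 f (q t) (mkposreal _ Hpe) B3) as N. simpl in N.
    rewrite Hm in N. pose proof (Rmin_r (norm (minus (p t) f)) (norm (minus (q t) f))). lra.
Qed.


Lemma minus_plus_cancel {G : AbelianGroup} (x y z : G) :
  minus (plus x y) (plus x z) = minus y z.
Proof.
  unfold minus. rewrite opp_plus. rewrite (plus_comm x y). rewrite <- plus_assoc.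
  f_equal. rewrite plus_assoc. eapply eq_trans; [|apply plus_zero_l]. f_equal. apply plus_opp_r.
Qed.

Lemma Rpower_pos x y : 0 < Rpower x y.
Proof. unfold Rpower. apply exp_pos. Qed.

Lemma halving x B : 0 <= B -> (forall k : nat, x <= B / 2 ^ k) -> x <= 0.
Proof.
  intros HB Hk. apply Rnot_lt_le. intros Hx.
  assert (Hy : 0 < x / (B + 1)) by (apply Rdiv_lt_0_compat; lra).
  destruct (pow_lt_1_zero (/ 2) ltac:(rewrite Rabs_pos_eq; lra) _ Hy) as [N HN].
  specialize (HN N (le_n N)). specialize (Hk N).
  rewrite Rabs_pos_eq in HN by (apply pow_le; lra).
  rewrite <- Rinv_pow in HN by lra.
  assert (H2 : 0 < 2 ^ N) by (apply pow_lt; lra).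
  assert (B / 2 ^ N <= B * (x / (B + 1))).
  { unfold Rdiv at 1. apply Rmult_le_compat_l; lra. }
  assert (B * (x / (B + 1)) < x).
  { replace (B * (x / (B + 1))) with (x - x / (B + 1)) by (field; lra). lra. }
  lra.
Qed.

Lemma lim_arg {F : NormedModule R_AbsRing} (SF : R -> F -> F) (dc : R -> F) tau t N :
  tau < t -> continuous dc t ->
  filterlim (fun p : F * R => SF (snd p) (fst p))
    (within (fun p : F * R => 0 <= snd p) (locally (dc t, 0))) (locally (SF 0 (dc t))) ->
  SF 0 (dc t) = dc t ->
  (forall a, tau <= a < t -> norm (SF (t - a) (dc a)) <= N) -> norm (dc t) <= N.
Proof.
  intros Htt Hc Hj H0 Hb. apply Rnot_lt_le. intros Hlt.
  pose proof (@norm_factor_gt_0 _ F) as Hnf.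
  assert (Heps : 0 < (norm (dc t) - N) / @norm_factor _ F) by (apply Rdiv_lt_0_compat; lra).
  destruct (proj1 (filterlim_locally _ _) Hj (mkposreal _ Heps)) as [e He].
  destruct (Hc _ (locally_ball (dc t) e)) as [dl Hdl].
  set (m := Rmin e dl).
  assert (Hm : 0 < m) by (apply Rmin_pos; apply cond_pos).
  set (a := Rmax tau (t - m / 2)).
  assert (Ha1 : tau <= a) by apply Rmax_l.
  assert (Ha2 : t - m / 2 <= a) by apply Rmax_r.
  assert (Ha3 : a < t) by (unfold a, Rmax; destruct Rle_dec; lra).
  assert (Hme : m <= e) by apply Rmin_l.
  assert (Hmd : m <= dl) by apply Rmin_r.
  assert (Hball : ball (dc t) e (dc a)).
  { apply Hdl. apply ballR. rewrite Rabs_left1 by lra. lra. }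
  specialize (He (dc a, t - a)).
  assert (Hb2 : ball (SF 0 (dc t)) (mkposreal _ Heps) (SF (t - a) (dc a))).
  { apply He. split; simpl. exact Hball. apply ballR. rewrite Rabs_pos_eq; lra. simpl; lra. }
  rewrite H0 in Hb2.
  pose proof (norm_compat2 _ _ _ Hb2) as N2. simpl in N2.
  replace (@norm_factor _ F * ((norm (dc t) - N) / @norm_factor _ F)) with (norm (dc t) - N) in N2 by (field; lra).
  pose proof (norm_triangle_inv (SF (t - a) (dc a)) (dc t)) as T1.
  specialize (Hb a (conj Ha1 Ha3)).
  apply Rabs_le_between in T1. lra.
Qed.

Lemma cont_norm {V : NormedModule R_AbsRing} (f : R -> V) s :
  continuous f s -> continuous (fun x => norm (f x)) s.
Proof. intros H. apply (continuous_comp f norm). exact H. apply filterlim_norm. Qed.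

Lemma mpc_c {V : CompleteNormedModule R_AbsRing} (x y z : V) :
  minus (plus x y) (plus x z) = minus y z.
Proof. exact (minus_plus_cancel x y z). Qed.

Lemma norm_zero_c {V : CompleteNormedModule R_AbsRing} : norm (@zero V) = 0.
Proof. exact norm_zero. Qed.

Lemma dz_c {V : CompleteNormedModule R_AbsRing} (x y : V) : norm (minus x y) <= 0 -> x = y.
Proof.
  intros H. apply minus_zero_eq. pose proof (norm_ge_0 (minus x y)).
  assert (Hn0 : norm (minus x y) = 0) by lra. exact (norm_eq_zero _ Hn0).
Qed.

Lemma norm_mm_c {V : CompleteNormedModule R_AbsRing} (x : V) : norm (minus x x) = 0.
Proof. exact (eq_trans (f_equal norm (minus_eq_zero x)) norm_zero). Qed.

Lemma cl_cont t0 t1 s : t0 <= t1 -> continuous (cl t0 t1) s.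
Proof.
  intros H. apply filterlim_locally. intros eps. exists eps. intros y Hy.
  apply ballR. pose proof (proj1 (ballR _ _ _) Hy). pose proof (cl_lip t0 t1 y s H). lra.
Qed.

Theorem proposition2p5
  (Fp F Fm : CompleteNormedModule R_AbsRing)
  (i1 : Fp -> F) (i2 : F -> Fm) (A : Fp -> Fm) (S : R -> Fm -> Fm)
  (SF : R -> F -> F) (u : R -> R) (SFm : R -> Fm -> F) (um : R -> R) (sigma : R)
  (DomP : F -> R -> Prop) (P : F -> R -> Fm)
  (Hstd : standing_assumptions i1 i2 A S SF u SFm um sigma DomP P)
  (f0 : F) (t0 : R) (Hdom : DomP f0 t0)
  (T T' : Rbar) (phi phi' : R -> F)
  (Hphi : VP_solution i2 S DomP P f0 t0 T phi)
  (Hphi' : VP_solution i2 S DomP P f0 t0 T' phi') :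
  forall t, t0 <= t -> Rbar_lt t (Rbar_min T T') -> phi t = phi' t.
Proof.
  destruct Hstd as (Hi1 & Hi2 & HAlin & Hequiv & HS & Hgen & HSF & HSFc & Hu & HSFb
    & HSFm & HSFmc & Hum & HSFmb & Hsig & HumC & Hopen & Hlip).
  destruct Hi2 as (Hi2l & Hi2inj & _).
  destruct HS as (HSlin & HS0 & HSsg & _).
  destruct Hphi as (_ & Hc1 & Hd1 & He1).
  destruct Hphi' as (_ & Hc2 & Hd2 & He2).
  intros t1 Ht01 Ht1.
  assert (HT : Rbar_lt t1 T) by (eapply Rbar_lt_le_trans; [exact Ht1| apply Rbar_min_l]).
  assert (HT' : Rbar_lt t1 T') by (eapply Rbar_lt_le_trans; [exact Ht1| apply Rbar_min_r]).
  assert (HTs : forall s, s <= t1 -> Rbar_lt s T) by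
    (intros s Hs; eapply Rbar_le_lt_trans; [|exact HT]; simpl; lra).
  assert (HTs' : forall s, s <= t1 -> Rbar_lt s T') by
    (intros s Hs; eapply Rbar_le_lt_trans; [|exact HT']; simpl; lra).
  assert (SF0 : forall f, SF 0 f = f).
  { intros f. apply Hi2inj. rewrite HSF by lra. apply HS0. }
  assert (SFm0 : forall r, 0 < r -> SFm r zero = zero).
  { intros r Hr. apply Hi2inj. rewrite HSFm by auto.
    transitivity (@zero Fm). apply (linear_zero _ (HSlin r ltac:(lra))).
    symmetry. apply (linear_zero _ Hi2l). }
  assert (D0 : phi t0 = phi' t0).
  { destruct (He1 t0 (Rle_refl _) (HTs t0 Ht01)) as [v [Hv Ev]].
    destruct (He2 t0 (Rle_refl _) (HTs' t0 Ht01)) as [v' [Hv' Ev']].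
    assert (v = zero) by (rewrite <- (is_RInt_unique _ _ _ _ Hv); apply RInt_point).
    assert (v' = zero) by (rewrite <- (is_RInt_unique _ _ _ _ Hv'); apply RInt_point).
    subst v v'. apply Hi2inj. rewrite Ev, Ev'. reflexivity. }
  set (pc := fun x => phi (cl t0 t1 x)).
  set (pc' := fun x => phi' (cl t0 t1 x)).
  assert (Hpc : forall s, t0 <= s <= t1 -> continuous pc s).
  { intros s Hs. apply (clamp_cont phi t0 t1 T s Hs HT). intros; apply Hc1; auto. }
  assert (Hpc' : forall s, t0 <= s <= t1 -> continuous pc' s).
  { intros s Hs. apply (clamp_cont phi' t0 t1 T' s Hs HT'). intros; apply Hc2; auto. }
  set (dc := fun x => minus (pc x) (pc' x)).
  assert (Hdc : forall s, t0 <= s <= t1 -> continuous dc s).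
  { intros s Hs. unfold dc. apply (continuous_minus pc pc'); auto. }
  assert (Hdc_eq : forall s, t0 <= s <= t1 -> dc s = minus (phi s) (phi' s)).
  { intros s Hs. unfold dc, pc, pc'. rewrite cl_id; auto. }
  destruct (cont_bound (fun x => norm (dc x)) t0 t1 Ht01) as [B HB].
  { intros c Hc. apply (cont_norm dc). auto. }
  assert (HB0 : 0 <= B) by (pose proof (HB t0 (conj (Rle_refl _) Ht01)); pose proof (norm_ge_0 (dc t0)); lra).
  destruct (cont_bound (fun x => norm (pc x)) t0 t1 Ht01) as [Bp HBp].
  { intros c Hc. apply (cont_norm pc). auto. }
  destruct (cont_bound (fun x => norm (pc' x)) t0 t1 Ht01) as [Bq HBq].
  { intros c Hc. apply (cont_norm pc'). auto. }
  set (Cs := fun z : F * R => t0 <= snd z <= t1 /\ (fst z = pc (snd z) \/ fst z = pc' (snd z))).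
  destruct (Hlip Cs) as (L & M & HL & HM & Hlp).
  { exact (@graph_closed F pc pc' t0 t1 Hpc Hpc'). }
  { exists (Rmax Bp Bq + Rabs t0 + Rabs t1). intros [f t] [[Ha Hb] Hor]. simpl in *.
    assert (norm f <= Rmax Bp Bq).
    { destruct Hor as [E|E]; rewrite E.
      - eapply Rle_trans; [apply HBp; lra| apply Rmax_l].
      - eapply Rle_trans; [apply HBq; lra| apply Rmax_r]. }
    assert (Rabs t <= Rabs t0 + Rabs t1) by
      (unfold Rabs; repeat destruct Rcase_abs; lra).
    lra. }
  { intros [f t] [[Ha Hb] [E|E]]; simpl in *; subst f; unfold pc, pc'; rewrite cl_id by lra.
    - apply Hd1; [lra | apply HTs; lra].
    - apply Hd2; [lra | apply HTs'; lra]. }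
  assert (Cs1 : forall x, Cs (pc x, cl t0 t1 x)).
  { intros x. pose proof (cl_in t0 t1 x Ht01). split; simpl; auto. left.
    unfold pc. rewrite (cl_id t0 t1 (cl t0 t1 x)); auto. }
  assert (Cs2 : forall x, Cs (pc' x, cl t0 t1 x)).
  { intros x. pose proof (cl_in t0 t1 x Ht01). split; simpl; auto. right.
    unfold pc'. rewrite (cl_id t0 t1 (cl t0 t1 x)); auto. }
  set (gc := fun x => minus (P (pc x) (cl t0 t1 x)) (P (pc' x) (cl t0 t1 x))).
  assert (Hgc : forall s, t0 <= s <= t1 -> continuous gc s).
  { intros s Hs. unfold gc. apply (continuous_minus (fun x => P (pc x) (cl t0 t1 x)) (fun x => P (pc' x) (cl t0 t1 x))).
    - apply (lip_cont _ pc (cl t0 t1) s L M HL HM).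
      + intros x. apply Hlp; [apply Cs1 | apply Cs1].
      + auto.
      + apply cl_cont; auto.
    - apply (lip_cont _ pc' (cl t0 t1) s L M HL HM).
      + intros x. apply Hlp; [apply Cs2 | apply Cs2].
      + auto.
      + apply cl_cont; auto. }
  assert (Hgc_eq : forall s, t0 <= s <= t1 -> gc s = minus (P (phi s) s) (P (phi' s) s)).
  { intros s Hs. unfold gc, pc, pc'. rewrite cl_id; auto. }
  assert (Hgb : forall s, t0 <= s <= t1 -> norm (gc s) <= L * norm (dc s)).
  { intros s Hs. unfold gc, dc. pose proof (Hlp _ _ _ _ (Cs1 s) (Cs2 s)) as H.
    replace (cl t0 t1 s - cl t0 t1 s) with 0 in H by ring. rewrite Rabs_R0 in H. lra. }
  destruct Hsig as [Hsig0 Hsig1].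
  destruct HumC as (C & delta & Hdelta & HC).
  destruct (cont_bound um (delta / 2) (t1 - t0 + delta) ltac:(lra)) as [Mu HMu].
  { intros c Hc. apply (proj2 (Hum c ltac:(lra))). }
  set (D := t1 - t0 + delta).
  set (K := Rmax (Rmax C 0) (Rmax Mu 0 / Rpower D (sigma - 1))).
  assert (HK0 : 0 <= K) by (unfold K; eapply Rle_trans; [|apply Rmax_l]; apply Rmax_r).
  assert (HK : forall r, 0 < r <= t1 - t0 -> um r <= K * Rpower r (sigma - 1)).
  { intros r Hr. pose proof (Rpower_pos r (sigma - 1)) as Hp.
    destruct (Rlt_dec r delta) as [Hrd|Hrd].
    - eapply Rle_trans. apply HC; lra. apply Rmult_le_compat_r. lra.
      unfold K. eapply Rle_trans; [|apply Rmax_l]. apply Rmax_l.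
    - assert (HDp : 0 < Rpower D (sigma - 1)) by apply Rpower_pos.
      assert (Hle : Rpower D (sigma - 1) <= Rpower r (sigma - 1)).
      { replace (sigma - 1) with (- (1 - sigma)) by ring. rewrite !Rpower_Ropp.
        apply Rinv_le_contravar. apply Rpower_pos.
        apply Rle_Rpower_l. lra. unfold D. lra. }
      eapply Rle_trans. apply HMu. unfold D in *. lra.
      eapply Rle_trans. apply (Rmax_l Mu 0).
      replace (Rmax Mu 0) with (Rmax Mu 0 / Rpower D (sigma - 1) * Rpower D (sigma - 1)) at 1 by (field; lra).
      assert (0 <= Rmax Mu 0 / Rpower D (sigma - 1)).
      { apply Rdiv_le_0_compat. apply Rmax_r. auto. }
      eapply Rle_trans. apply Rmult_le_compat_l. auto. exact Hle.
      apply Rmult_le_compat_r. lra. unfold K. apply Rmax_r. }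
  assert (HumP : forall r, 0 < r -> 0 <= um r) by (intros r Hr; pose proof (proj1 (Hum r Hr)); lra).
  assert (cH : forall t z, t0 <= z -> z < t -> t <= t1 ->
             continuous (fun s => SFm (t - s) (gc s)) z).
  { intros t z Hz1 Hz2 Ht.
    apply (continuous_comp_2 gc (fun x => t - x) (fun x r => SFm r x)).
    - apply Hgc. lra.
    - apply (continuous_minus (fun _ => t) (fun x => x)). apply continuous_const. apply continuous_id.
    - apply HSFmc. simpl. lra. }
  assert (ExI : forall t a b, t0 <= a <= b -> b < t -> t <= t1 ->
             ex_RInt (fun s => SFm (t - s) (gc s)) a b).
  { intros t a b Hab Hb Ht. apply ex_RInt_continuous. intros z Hz.
    rewrite Rmin_left in Hz by lra. rewrite Rmax_right in Hz by lra. apply cH; lra. }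
  assert (KI : forall t a, t0 <= a -> a < t -> t <= t1 ->
     exists Kv, is_RInt (fun s => SFm (t - s) (gc s)) t0 a Kv /\
                SF (t - a) (minus (phi a) (phi' a)) = Kv).
  { intros t a Ha1 Ha2 Ht.
    destruct (He1 a Ha1 (HTs a ltac:(lra))) as [w [Hw Ew]].
    destruct (He2 a Ha1 (HTs' a ltac:(lra))) as [w' [Hw' Ew']].
    destruct (ExI t t0 a ltac:(lra) Ha2 Ht) as [Kv HKv].
    exists Kv. split; auto.
    assert (H1 := is_RInt_lin (S (t - a)) _ t0 a _ (HSlin (t - a) ltac:(lra)) (is_RInt_minus _ _ _ _ _ _ Hw Hw')).
    assert (H2 := is_RInt_lin i2 _ t0 a _ Hi2l HKv).
    assert (H3 : is_RInt (fun s => i2 (SFm (t - s) (gc s))) t0 a (S (t - a) (minus w w'))).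
    { eapply is_RInt_ext; [|exact H1]. intros x Hx.
      rewrite Rmin_left in Hx by lra. rewrite Rmax_right in Hx by lra.
      simpl. rewrite HSFm by lra. rewrite Hgc_eq by lra.
      rewrite <- (linear_minus (S (a - x))) by (apply HSlin; lra).
      rewrite <- HSsg by lra. f_equal. ring. }
    apply Hi2inj.
    rewrite HSF by lra.
    rewrite (linear_minus i2) by auto. rewrite Ew, Ew'.
    transitivity (S (t - a) (minus w w')). { f_equal. apply mpc_c. }
    rewrite <- (is_RInt_unique _ _ _ _ H3). apply is_RInt_unique. exact H2. }
  assert (E : forall tau t beta, t0 <= tau -> tau < t -> t <= t1 -> 0 <= beta ->
     (forall s, t0 <= s <= tau -> phi s = phi' s) ->
     (forall s, tau <= s <= t -> norm (dc s) <= beta) ->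
     norm (dc t) <= L * K * beta / sigma * Rpower (t - tau) sigma).
  { intros tau t beta Htau1 Htau2 Ht Hbeta Hz Hb.
    apply (lim_arg SF dc tau t); auto.
    - apply Hdc. lra.
    - apply HSFc. lra.
    - intros a [Ha1 Ha2].
      rewrite (Hdc_eq a) by lra.
      destruct (KI t a ltac:(lra) Ha2 Ht) as [Kv [HKv EK]]. rewrite EK.
      destruct (ExI t t0 tau ltac:(lra) ltac:(lra) Ht) as [K1 HK1].
      destruct (ExI t tau a ltac:(lra) Ha2 Ht) as [K2 HK2].
      assert (EKv : Kv = plus K1 K2).
      { rewrite <- (is_RInt_unique _ _ _ _ HKv). apply is_RInt_unique.
        exact (is_RInt_Chasles _ _ _ _ _ _ HK1 HK2). }
      assert (EK1 : K1 = zero).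
      { apply norm_eq_zero. apply Rle_antisym; [|apply norm_ge_0].
        pose proof (norm_RInt_le_const (fun s => SFm (t - s) (gc s)) t0 tau K1 0 ltac:(lra)) as HN.
        rewrite Rmult_0_r in HN. apply HN; auto.
        intros x Hx. rewrite Hgc_eq by lra. rewrite (Hz x) by lra. rewrite minus_eq_zero.
        rewrite SFm0 by lra. rewrite norm_zero_c. lra. }
      rewrite EKv, EK1, plus_zero_l.
      set (c := L * K * beta).
      assert (Hc : 0 <= c) by (unfold c; apply Rmult_le_pos; [apply Rmult_le_pos|]; auto).
      eapply Rle_trans.
      + apply (norm_RInt_le (fun s => SFm (t - s) (gc s)) (fun s => c * Rpower (t - s) (sigma - 1)) tau a K2 (c / sigma * (Rpower (t - tau) sigma - Rpower (t - a) sigma)) Ha1); [|exact HK2|apply int_pow; lra].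
        intros x Hx.
        eapply Rle_trans. apply HSFmb. lra.
        eapply Rle_trans. apply Rmult_le_compat_l. apply HumP; lra. apply Hgb. lra.
        assert (norm (dc x) <= beta) by (apply Hb; lra).
        assert (um (t - x) <= K * Rpower (t - x) (sigma - 1)) by (apply HK; lra).
        pose proof (Rpower_pos (t - x) (sigma - 1)). pose proof (HumP (t - x) ltac:(lra)).
        pose proof (norm_ge_0 (dc x)).
        unfold c. replace (L * K * beta * Rpower (t - x) (sigma - 1)) with
          ((K * Rpower (t - x) (sigma - 1)) * (L * beta)) by ring.
        apply Rmult_le_compat; auto. apply Rmult_le_pos; auto.
        apply Rmult_le_compat_l; auto.
      + pose proof (Rpower_pos (t - a) sigma).
        assert (0 <= c / sigma) by (apply Rdiv_le_0_compat; lra).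
        unfold c at 2. apply Rmult_le_compat_l; auto. lra. }
  set (q := sigma / (2 * (L * K + 1))).
  assert (LK0 : 0 <= L * K) by (apply Rmult_le_pos; auto).
  assert (Hq : 0 < q) by (unfold q; apply Rdiv_lt_0_compat; lra).
  set (h := Rpower q (/ sigma)).
  assert (Hh : 0 < h) by apply Rpower_pos.
  assert (Hhs : Rpower h sigma = q).
  { unfold h. rewrite Rpower_mult. replace (/ sigma * sigma) with 1 by (field; lra).
    apply Rpower_1; auto. }
  assert (Hdz : forall s, t0 <= s <= t1 -> norm (dc s) <= 0 -> phi s = phi' s).
  { intros s Hs Hn. apply dz_c. rewrite <- Hdc_eq by auto. exact Hn. }
  assert (Step : forall tau, t0 <= tau <= t1 -> (forall s, t0 <= s <= tau -> phi s = phi' s) ->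
            forall s, tau <= s <= Rmin (tau + h) t1 -> phi s = phi' s).
  { intros tau Htau Hz.
    assert (Hk : forall k, forall s, tau <= s <= Rmin (tau + h) t1 -> norm (dc s) <= B / 2 ^ k).
    { induction k; intros s Hs; pose proof (Rmin_l (tau + h) t1); pose proof (Rmin_r (tau + h) t1).
      - simpl. replace (B / 1) with B by field. apply HB. lra.
      - assert (H2k : 0 < 2 ^ k) by (apply pow_lt; lra).
        assert (Hbk : 0 <= B / 2 ^ k) by (apply Rdiv_le_0_compat; lra).
        destruct (Req_dec s tau) as [Es|Es].
        + subst s. rewrite Hdc_eq by lra. rewrite (Hz tau) by lra. rewrite norm_mm_c. simpl. apply Rdiv_le_0_compat; lra.
        + eapply Rle_trans. apply (E tau s (B / 2 ^ k)); try lra.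
          { exact Hz. }
          { intros s' Hs'. apply IHk. lra. }
          assert (Rpower (s - tau) sigma <= Rpower h sigma).
          { apply Rle_Rpower_l. lra. lra. }
          rewrite Hhs in H1.
          assert (0 <= L * K * (B / 2 ^ k) / sigma) by (apply Rdiv_le_0_compat; [apply Rmult_le_pos|]; lra).
          eapply Rle_trans. apply Rmult_le_compat_l. auto. exact H1.
          unfold q. simpl.
          replace (L * K * (B / 2 ^ k) / sigma * (sigma / (2 * (L * K + 1))))
            with ((B / (2 * 2 ^ k)) * (L * K / (L * K + 1))) by (field; lra).
          replace (B / (2 * 2 ^ k)) with ((B / (2 * 2 ^ k)) * 1) at 2 by ring.
          apply Rmult_le_compat_l. apply Rdiv_le_0_compat; lra.
          apply (Rmult_le_reg_r (L * K + 1)). lra.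
          replace (L * K / (L * K + 1) * (L * K + 1)) with (L * K) by (field; lra). lra. }
    intros s Hs. pose proof (Rmin_r (tau + h) t1).
    apply Hdz. lra. apply (halving _ B HB0). intros k. apply Hk. auto. }
  assert (Outer : forall n : nat, forall s, t0 <= s <= Rmin (t0 + INR n * h) t1 -> phi s = phi' s).
  { induction n; intros s Hs.
    - simpl in Hs. pose proof (Rmin_l (t0 + 0 * h) t1).
      assert (s = t0) by lra. subst s. auto.
    - set (tau := Rmin (t0 + INR n * h) t1).
      pose proof (pos_INR n).
      assert (Htau : t0 <= tau <= t1).
      { split. unfold tau. apply Rmin_glb. nra. lra. apply Rmin_r. }
      destruct (Rle_dec s tau) as [Hst|Hst].
      + apply IHn. unfold tau in Hst. lra.
      + apply (Step tau Htau).
        * intros s' Hs'. apply IHn. unfold tau in Hs'. lra.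
        * rewrite S_INR in Hs.
          pose proof (Rmin_l (t0 + (INR n + 1) * h) t1). pose proof (Rmin_r (t0 + (INR n + 1) * h) t1).
          assert (tau = t0 + INR n * h).
          { unfold tau, Rmin in *. destruct Rle_dec; lra. }
          split. lra. apply Rmin_glb; lra. }
  destruct (nfloor_ex ((t1 - t0) / h)) as [n [Hn1 Hn2]].
  { apply Rdiv_le_0_compat; lra. }
  apply (Outer (Datatypes.S n)). split. auto.
  rewrite S_INR. rewrite Rmin_right. lra.
  assert (t1 - t0 < (INR n + 1) * h).
  { apply (Rmult_lt_reg_r (/ h)). apply Rinv_0_lt_compat; auto.
    replace ((INR n + 1) * h * / h) with (INR n + 1) by (field; lra). exact Hn2. }
  lra.
Qed.
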